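(* Let $\ell$ be a positive integer and $n$ an integer such that $n/\ell\in\mathbb Z$ and $n\ell+\ell^2>0$. For $u,v\in\mathbb C$, $\tau\in\mathbb H$ and $n',e'\in\mathbb C$ define $$\chi_{\mathsf T^{n,\ell}_{n',e'}}(u,v;\tau)=i(-1)^{\lfloor e'\rfloor}\frac{\theta_1(u;\tau)}{\eta(\tau)^3}\sum_{m\in\mathbb Z}(-1)^{m\ell}e^{2\pi i v(e'+m\ell)}e^{2\pi i u(n'+mn)}e^{2\pi i\tau\left(n'e'+\frac{e'^2}{2}+\frac{m^2}{2}(2n\ell+\ell^2)+m(ne'+n'\ell+\ell e')\right)},$$ where $\lfloor e'\rfloor$ is the largest integer less than or equal to the real part of $e'$. Then, writing $y=e^{2\pi i v}$, $z=e^{2\pi i u}$, $$\chi_{\mathsf T^{n,\ell}_{n',e'}}(u+1,v;\tau)=e^{2\pi i(n'-1/2)}\chi_{\mathsf T^{n,\ell}_{n',e'}}(u,v;\tau),\qquad \chi_{\mathsf T^{n,\ell}_{n',e'}}(u+\tau,v;\tau)=y^{-1}\chi_{\mathsf T^{n,\ell}_{n'-1,e'+1}}(u,v;\tau),$$ $$\chi_{\mathsf T^{n,\ell}_{n',e'}}(u,v+1;\tau)=e^{2\pi i e'}\chi_{\mathsf T^{n,\ell}_{n',e'}}(u,v;\tau),\qquad \chi_{\mathsf T^{n,\ell}_{n',e'}}(u,v+\tau;\tau)=z^{-1}\chi_{\mathsf T^{n,\ell}_{n'+1,e'}}(u,v;\tau),$$ and more generally, for every $\alpha\in\mathbb R$,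 $$\chi_{\mathsf T^{n,\ell}_{n',e'}}(u,v+\alpha\tau;\tau)=e^{-2\pi i\alpha u}\,\chi_{\mathsf T^{n,\ell}_{n'+\alpha,e'}}(u,v;\tau).$$
   Context: $\theta_1(u;\tau)=-i\sum_{n\in\mathbb Z}(-1)^n e^{\pi i(n+\frac12)^2\tau+2\pi i u(n+\frac12)}$ and $\eta(\tau)=e^{\pi i\tau/12}\prod_{j\ge1}(1-e^{2\pi i j\tau})$. The function $\chi_{\mathsf T^{n,\ell}_{n',e'}}$ is the character of the typical module $\mathsf T^{n,\ell}_{n',e'}$ of a W-superalgebra extending $\widehat{\mathfrak{gl}}(1|1)$; here it is taken as defined by the displayed formula (the series converges since $2n\ell+\ell^2>0$). *)

(* Defs.v *)
From Stdlib Require Import Reals ZArith.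
From Coquelicot Require Import Coquelicot.

Open Scope C_scope.

Definition cexp (z : C) : C :=
  ((exp (Re z) * cos (Im z))%R, (exp (Re z) * sin (Im z))%R).

(* Limit of a complex sequence, taken componentwise (total; equals the true
   limit whenever the sequence converges). *)
Definition CLim (s : nat -> C) : C :=
  (real (Lim_seq (fun k => Re (s k))), real (Lim_seq (fun k => Im (s k)))).

Fixpoint csum (f : nat -> C) (n : nat) : C :=
  match n with
  | O => f O
  | S k => csum f k + f (S k)
  end.

Fixpoint cprod (f : nat -> C) (n : nat) : C :=
  match n with
  | O => 1
  | S k => cprod f k * f (S k)
  end.

(* Sum over Z: limit of the symmetric partial sums sum_{|k| <= N} f k. *)
Definition zsum (f : Z -> C) : C :=
  CLim (fun N => csum (fun k => f (Z.of_nat k - Z.of_nat N)%Z) (2 * N)).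

Definition zsign (k : Z) : C := if Z.even k then 1 else -1.

Definition ZtoC (k : Z) : C := RtoC (IZR k).

Definition theta1 (u tau : C) : C :=
  - Ci * zsum (fun k =>
      zsign k * cexp (RtoC PI * Ci * (ZtoC k + /2) * (ZtoC k + /2) * tau
                      + 2 * RtoC PI * Ci * u * (ZtoC k + /2))).

Definition eta (tau : C) : C :=
  cexp (RtoC PI * Ci * tau / 12) *
  CLim (fun N => cprod (fun j => 1 - cexp (2 * RtoC PI * Ci * RtoC (INR j) * tau)) N).

Definition floorRe (z : C) : Z := Int_part (Re z).

Definition chiT (n l : Z) (n' e' u v tau : C) : C :=
  Ci * zsign (floorRe e') * theta1 u tau / (eta tau * eta tau * eta tau) *
  zsum (fun m =>
    zsign (m * l)%Z
    * cexp (2 * RtoC PI * Ci * v * (e' + ZtoC m * ZtoC l))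
    * cexp (2 * RtoC PI * Ci * u * (n' + ZtoC m * ZtoC n))
    * cexp (2 * RtoC PI * Ci * tau *
        (n' * e' + e' * e' / 2
         + ZtoC m * ZtoC m / 2 * (2 * ZtoC n * ZtoC l + ZtoC l * ZtoC l)
         + ZtoC m * (ZtoC n * e' + n' * ZtoC l + ZtoC l * e')))).

(* Main.v *)
Require Import Defs.
From Stdlib Require Import Reals ZArith.
From Coquelicot Require Import Coquelicot.
From Stdlib Require Import Lia Lra Psatz FunctionalExtensionality.

Open Scope C_scope.


Lemma Cpair_eq (a b c d : R) : a = c -> b = d -> (a, b) = (c, d).
Proof. intros; subst; reflexivity. Qed.

Lemma cexp_add a b : cexp (a + b) = cexp a * cexp b.
Proof.
  destruct a as [a1 a2], b as [b1 b2]. unfold cexp, Cmult; simpl.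
  rewrite exp_plus, cos_plus, sin_plus. apply Cpair_eq; ring.
Qed.

Lemma cexp_0 : cexp 0 = 1.
Proof. unfold cexp; simpl. rewrite exp_0, cos_0, sin_0. apply Cpair_eq; ring. Qed.

Lemma csum_ext f g n : (forall k, f k = g k) -> csum f n = csum g n.
Proof. intros H; induction n; simpl; rewrite ?IHn, ?H; reflexivity. Qed.

Lemma csum_shift g n : csum g (S n) = g O + csum (fun k => g (S k)) n.
Proof.
  induction n. simpl. reflexivity.
  change (csum g (S (S n))) with (csum g (S n) + g (S (S n))).
  rewrite IHn. simpl. ring.
Qed.

Lemma csum_scal c f n : csum (fun k => c * f k) n = c * csum f n.
Proof. induction n; simpl; rewrite ?IHn; ring. Qed.

Definition psum (f : Z -> C) (N : nat) : C :=
  csum (fun k => f (Z.of_nat k - Z.of_nat N)%Z) (2 * N).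

Lemma psum_0 f : psum f 0 = f 0%Z.
Proof. reflexivity. Qed.

Lemma psum_S f N : psum f (S N) = psum f N + f (- Z.of_nat (S N))%Z + f (Z.of_nat (S N)).
Proof.
  unfold psum. replace (2 * S N)%nat with (S (S (2 * N))) by lia.
  change (csum ?g (S (S ?m))) with (csum g (S m) + g (S (S m))).
  rewrite csum_shift.
  rewrite (csum_ext (fun k => f (Z.of_nat (S k) - Z.of_nat (S N))%Z)
                    (fun k => f (Z.of_nat k - Z.of_nat N)%Z)).
  2:{ intros k. f_equal. lia. }
  replace (Z.of_nat 0 - Z.of_nat (S N))%Z with (- Z.of_nat (S N))%Z by lia.
  replace (Z.of_nat (S (S (2 * N))) - Z.of_nat (S N))%Z with (Z.of_nat (S N)) by lia.
  ring.
Qed.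

Definition zconv (f : Z -> C) (L : C) : Prop :=
  is_lim_seq (fun N => Re (psum f N)) (Re L) /\
  is_lim_seq (fun N => Im (psum f N)) (Im L).

Lemma zconv_zsum f L : zconv f L -> zsum f = L.
Proof.
  intros [H1 H2]. unfold zsum, CLim.
  change (fun N : nat => Re (csum (fun k : nat => f (Z.of_nat k - Z.of_nat N)%Z) (2 * N)))
    with (fun N => Re (psum f N)).
  change (fun N : nat => Im (csum (fun k : nat => f (Z.of_nat k - Z.of_nat N)%Z) (2 * N)))
    with (fun N => Im (psum f N)).
  rewrite (is_lim_seq_unique _ _ H1), (is_lim_seq_unique _ _ H2).
  destruct L; reflexivity.
Qed.

Lemma psum_scal c f N : psum (fun k => c * f k) N = c * psum f N.
Proof. unfold psum. apply csum_scal. Qed.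

Lemma lim_scal (a : R) u (l : R) : is_lim_seq u l -> is_lim_seq (fun n => a * u n)%R (a * l)%R.
Proof. intros H. pose proof (is_lim_seq_scal_l u a l H) as H'. simpl in H'. exact H'. Qed.

Lemma zconv_scal c f L : zconv f L -> zconv (fun k => c * f k) (c * L).
Proof.
  intros [H1 H2]. split.
  - apply is_lim_seq_ext with (fun N => (Re c * Re (psum f N) - Im c * Im (psum f N))%R).
    { intros N. rewrite psum_scal. destruct c, (psum f N); simpl. ring. }
    replace (Re (c * L)) with (Re c * Re L - Im c * Im L)%R by (destruct c, L; simpl; ring).
    apply is_lim_seq_minus'; apply lim_scal; assumption.
  - apply is_lim_seq_ext with (fun N => (Re c * Im (psum f N) + Im c * Re (psum f N))%R).
    { intros N. rewrite psum_scal. destruct c, (psum f N); simpl. ring. }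
    replace (Im (c * L)) with (Re c * Im L + Im c * Re L)%R by (destruct c, L; simpl; ring).
    apply is_lim_seq_plus'; apply lim_scal; assumption.
Qed.

Definition gdecay (f : Z -> C) : Prop :=
  exists D, forall k, (Rabs (Re (f k)) <= D * exp (- Rabs (IZR k)))%R /\
                      (Rabs (Im (f k)) <= D * exp (- Rabs (IZR k)))%R.

Lemma exp_nat N : (exp (- INR N) = (exp (-1)) ^ N)%R.
Proof.
  induction N. simpl. rewrite Ropp_0, exp_0. reflexivity.
  rewrite S_INR, Ropp_plus_distr, exp_plus, IHN. simpl. replace (- (1))%R with (-1)%R by ring. apply Rmult_comm.
Qed.

Lemma Rabs_IZR_nat N : Rabs (IZR (Z.of_nat N)) = INR N.
Proof. rewrite <- INR_IZR_INZ. apply Rabs_pos_eq, pos_INR. Qed.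

Lemma Rabs_IZR_negnat N : Rabs (IZR (- Z.of_nat N)) = INR N.
Proof. rewrite opp_IZR, Rabs_Ropp. apply Rabs_IZR_nat. Qed.

Lemma exp_m1_lt : (Rabs (exp (-1)) < 1)%R.
Proof.
  rewrite Rabs_pos_eq by (left; apply exp_pos).
  rewrite <- exp_0. apply exp_increasing. lra.
Qed.

Lemma geom_lim D : is_lim_seq (fun N => D * exp (- INR N))%R 0.
Proof.
  replace (Finite 0) with (Rbar_mult D 0) by (simpl; f_equal; ring).
  apply is_lim_seq_scal_l.
  apply is_lim_seq_ext with (fun N => (exp (-1)) ^ N)%R.
  { intros; rewrite exp_nat; reflexivity. }
  apply is_lim_seq_geom, exp_m1_lt.
Qed.

Lemma squeeze0 (a b : nat -> R) : (forall N, Rabs (a N) <= b N)%R ->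
  is_lim_seq b 0 -> is_lim_seq a 0.
Proof.
  intros H Hb. apply is_lim_seq_le_le with (fun N => - b N)%R b.
  - intros N; specialize (H N). apply Rabs_le_between in H; lra.
  - pose proof (proj1 (is_lim_seq_opp b 0) Hb) as H'. simpl in H'. rewrite Ropp_0 in H'. exact H'.
  - exact Hb.
Qed.

Lemma gdecay_D f D : (forall k, (Rabs (Re (f k)) <= D * exp (- Rabs (IZR k)))%R) -> (0 <= D)%R.
Proof.
  intros H. specialize (H 0%Z). pose proof (Rabs_pos (Re (f 0%Z))). pose proof (exp_pos (- Rabs (IZR 0))).
  nra.
Qed.

Lemma Re_plus (x y : C) : Re (x + y) = (Re x + Re y)%R.
Proof. destruct x, y; reflexivity. Qed.
Lemma Im_plus (x y : C) : Im (x + y) = (Im x + Im y)%R.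
Proof. destruct x, y; reflexivity. Qed.

Definition sterm (g : Z -> R) (k : nat) : R :=
  match k with
  | O => g 0%Z
  | S j => (g (- Z.of_nat (S j))%Z + g (Z.of_nat (S j)))%R
  end.

Lemma Re_psum f N : Re (psum f N) = sum_n (sterm (fun k => Re (f k))) N.
Proof.
  induction N. rewrite sum_O. reflexivity.
  rewrite sum_Sn, psum_S, !Re_plus, IHN. simpl. unfold plus; simpl. ring.
Qed.

Lemma Im_psum f N : Im (psum f N) = sum_n (sterm (fun k => Im (f k))) N.
Proof.
  induction N. rewrite sum_O. reflexivity.
  rewrite sum_Sn, psum_S, !Im_plus, IHN. simpl. unfold plus; simpl. ring.
Qed.

Lemma sterm_conv (g : Z -> R) D : (forall k, Rabs (g k) <= D * exp (- Rabs (IZR k)))%R ->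
  exists l : R, is_lim_seq (sum_n (sterm g)) l.
Proof.
  intros H.
  assert (HD : (0 <= D)%R).
  { specialize (H 0%Z). pose proof (Rabs_pos (g 0%Z)). pose proof (exp_pos (- Rabs (IZR 0))). nra. }
  assert (Hex : ex_series (sterm g)).
  { apply (@ex_series_le R_AbsRing R_CompleteNormedModule) with (fun k => (2 * D) * (exp (-1)) ^ k)%R.
    - intros k. change (norm (sterm g k)) with (Rabs (sterm g k)).
      destruct k as [|j].
      + simpl. specialize (H 0%Z). rewrite Rabs_R0, Ropp_0, exp_0 in H. lra.
      + change (sterm g (S j)) with (g (- Z.of_nat (S j))%Z + g (Z.of_nat (S j)))%R. rewrite <- exp_nat.
        pose proof (H (- Z.of_nat (S j))%Z) as H1. pose proof (H (Z.of_nat (S j))) as H2.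
        rewrite Rabs_IZR_negnat in H1. rewrite Rabs_IZR_nat in H2.
        pose proof (Rabs_triang (g (- Z.of_nat (S j))%Z) (g (Z.of_nat (S j)))). lra.
    - assert (G := ex_series_scal (2 * D)%R (fun k => (exp (-1)) ^ k)%R (ex_series_geom _ exp_m1_lt)).
      eapply ex_series_ext; [| exact G]. intros; reflexivity. }
  exists (Series (sterm g)). apply Series_correct in Hex. exact Hex.
Qed.

Lemma gdecay_conv f : gdecay f -> exists L, zconv f L.
Proof.
  intros [D HD].
  destruct (sterm_conv (fun k => Re (f k)) D) as [l1 H1]. { intros k; apply HD. }
  destruct (sterm_conv (fun k => Im (f k)) D) as [l2 H2]. { intros k; apply HD. }
  exists (l1, l2). split.
  - apply is_lim_seq_ext with (sum_n (sterm (fun k => Re (f k)))). { intros; symmetry; apply Re_psum. } exact H1.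
  - apply is_lim_seq_ext with (sum_n (sterm (fun k => Im (f k)))). { intros; symmetry; apply Im_psum. } exact H2.
Qed.

Lemma gdecay_scal c f : gdecay f -> gdecay (fun k => c * f k).
Proof.
  intros [D HD]. exists ((Rabs (Re c) + Rabs (Im c)) * D)%R. intros k.
  destruct (HD k) as [H1 H2]. set (c1 := Re c). set (c2 := Im c).
  assert (E : forall x y : R, (Rabs (x * y) <= Rabs x * Rabs y)%R) by (intros; rewrite Rabs_mult; lra).
  pose proof (Rabs_pos c1). pose proof (Rabs_pos c2).
  change (Re (c * f k)) with (c1 * Re (f k) - c2 * Im (f k))%R.
  change (Im (c * f k)) with (c1 * Im (f k) + c2 * Re (f k))%R.
  split.
  - eapply Rle_trans. apply Rabs_triang. rewrite Rabs_Ropp, !Rabs_mult.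
    pose proof (Rmult_le_compat_l _ _ _ (Rabs_pos c1) H1).
    pose proof (Rmult_le_compat_l _ _ _ (Rabs_pos c2) H2). nra.
  - eapply Rle_trans. apply Rabs_triang. rewrite !Rabs_mult.
    pose proof (Rmult_le_compat_l _ _ _ (Rabs_pos c1) H2).
    pose proof (Rmult_le_compat_l _ _ _ (Rabs_pos c2) H1). nra.
Qed.

Lemma exp_le_exp x y : (x <= y -> exp x <= exp y)%R.
Proof. intros [H|H]. left; apply exp_increasing; auto. subst; lra. Qed.

Lemma exp_shift_bound k : (exp (- Rabs (IZR (k + 1))) <= exp 1 * exp (- Rabs (IZR k)))%R.
Proof.
  rewrite <- exp_plus. apply exp_le_exp. rewrite plus_IZR.
  pose proof (Rabs_triang (IZR k + 1) (-1)). replace (IZR k + 1 + -1)%R with (IZR k) in H by ring.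
  assert (E : (Rabs (-1) = 1)%R) by (rewrite Rabs_left; lra). rewrite E in H. lra.
Qed.

Lemma gdecay_shift f : gdecay f -> gdecay (fun k => f (k + 1)%Z).
Proof.
  intros [D HD]. exists (D * exp 1)%R. intros k.
  assert (H0 : (0 <= D)%R) by (apply (gdecay_D f); intros; apply HD).
  pose proof (exp_shift_bound k).
  destruct (HD (k + 1)%Z) as [H1 H2].
  split; eapply Rle_trans; [exact H1| |exact H2|]; rewrite Rmult_assoc; apply Rmult_le_compat_l; lra.
Qed.

Lemma zsum_scal c f : gdecay f -> zsum (fun k => c * f k) = c * zsum f.
Proof.
  intros Hd. destruct (gdecay_conv f Hd) as [L HL].
  rewrite (zconv_zsum _ _ HL). apply zconv_zsum, zconv_scal, HL.
Qed.

Lemma psum_shift f N : psum (fun k => f (k + 1)%Z) N = psum f N - f (- Z.of_nat N)%Z + f (Z.of_nat N + 1)%Z.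
Proof.
  induction N.
  - rewrite !psum_0. simpl. ring.
  - rewrite !psum_S, IHN.
    replace (- Z.of_nat (S N) + 1)%Z with (- Z.of_nat N)%Z by lia.
    replace (Z.of_nat (S N)) with (Z.of_nat N + 1)%Z by lia. ring.
Qed.

Lemma tail_lims f : gdecay f ->
  is_lim_seq (fun N => Re (f (- Z.of_nat N)%Z)) 0 /\ is_lim_seq (fun N => Im (f (- Z.of_nat N)%Z)) 0 /\
  is_lim_seq (fun N => Re (f (Z.of_nat N + 1)%Z)) 0 /\ is_lim_seq (fun N => Im (f (Z.of_nat N + 1)%Z)) 0.
Proof.
  intros [D HD].
  assert (H0 : (0 <= D)%R) by (apply (gdecay_D f); intros; apply HD).
  assert (Hm : forall N, (D * exp (- Rabs (IZR (- Z.of_nat N))) = D * exp (- INR N))%R).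
  { intros; rewrite Rabs_IZR_negnat; reflexivity. }
  assert (Hp : forall N, (D * exp (- Rabs (IZR (Z.of_nat N + 1))) <= D * exp (- INR N))%R).
  { intros N. apply Rmult_le_compat_l; auto. apply exp_le_exp.
    replace (Z.of_nat N + 1)%Z with (Z.of_nat (S N)) by lia. rewrite Rabs_IZR_nat, S_INR. lra. }
  repeat split; apply squeeze0 with (fun N => D * exp (- INR N))%R; try apply geom_lim; intros N.
  - rewrite <- Hm. apply HD.
  - rewrite <- Hm. apply HD.
  - eapply Rle_trans; [apply HD | apply Hp].
  - eapply Rle_trans; [apply HD | apply Hp].
Qed.

Lemma zsum_shift f : gdecay f -> zsum (fun k => f (k + 1)%Z) = zsum f.
Proof.
  intros Hd. destruct (gdecay_conv f Hd) as [L [HL1 HL2]].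
  destruct (tail_lims f Hd) as [T1 [T2 [T3 T4]]].
  rewrite (zconv_zsum f L); [| split; auto].
  apply zconv_zsum. split.
  - apply is_lim_seq_ext with (fun N => Re (psum f N) - Re (f (- Z.of_nat N)%Z) + Re (f (Z.of_nat N + 1)%Z))%R.
    { intros N. rewrite psum_shift. destruct (psum f N), (f (- Z.of_nat N)%Z), (f (Z.of_nat N + 1)%Z). simpl. ring. }
    replace (Re L) with (Re L - 0 + 0)%R by ring.
    apply is_lim_seq_plus'; [apply is_lim_seq_minus'|]; assumption.
  - apply is_lim_seq_ext with (fun N => Im (psum f N) - Im (f (- Z.of_nat N)%Z) + Im (f (Z.of_nat N + 1)%Z))%R.
    { intros N. rewrite psum_shift. destruct (psum f N), (f (- Z.of_nat N)%Z), (f (Z.of_nat N + 1)%Z). simpl. ring. }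
    replace (Im L) with (Im L - 0 + 0)%R by ring.
    apply is_lim_seq_plus'; [apply is_lim_seq_minus'|]; assumption.
Qed.

Lemma exp_gauss (a b c : R) : (a < 0)%R -> exists D, forall x : R,
  (exp (a * x * x + b * x + c) <= D * exp (- Rabs x))%R.
Proof.
  intros Ha. set (s := (Rabs b + 1)%R).
  exists (exp (c + s * s / (-4 * a)))%R. intros x.
  rewrite <- exp_plus. apply exp_le_exp.
  assert (Hx : (x * x = Rabs x * Rabs x)%R) by (rewrite <- Rabs_mult, Rabs_pos_eq; [reflexivity | nra]).
  assert (Hb : (b * x <= Rabs b * Rabs x)%R).
  { rewrite <- Rabs_mult. apply Rle_abs. }
  set (t := Rabs x) in *.
  assert (Hk : (s * s / (-4 * a) - (a * t * t + s * t) = (s + 2 * a * t) * (s + 2 * a * t) / (-4 * a))%R)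
    by (field; lra).
  assert (Hp : (0 <= (s + 2 * a * t) * (s + 2 * a * t) / (-4 * a))%R).
  { apply Rmult_le_pos. apply Rle_0_sqr. left. apply Rinv_0_lt_compat. lra. }
  unfold s in *. nra.
Qed.

Lemma sgn_cexp_bound (s w : C) : s = 1 \/ s = -1 ->
  (Rabs (Re (Cmult s (cexp w))) <= exp (Re w) /\ Rabs (Im (Cmult s (cexp w))) <= exp (Re w))%R.
Proof.
  destruct w as [w1 w2]. unfold cexp, Re, Im. simpl.
  pose proof (exp_pos w1). pose proof (COS_bound w2). pose proof (SIN_bound w2).
  intros [-> | ->]; simpl; split; apply Rabs_le; split; nra.
Qed.

Lemma term_decay (s W : Z -> C) (a b c : R) : (a < 0)%R ->
  (forall k, s k = 1 \/ s k = -1) ->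
  (forall k, Re (W k) = a * IZR k * IZR k + b * IZR k + c)%R ->
  gdecay (fun k => s k * cexp (W k)).
Proof.
  intros Ha Hs HW. destruct (exp_gauss a b c Ha) as [D HD]. exists D. intros k.
  specialize (HD (IZR k)). rewrite <- HW in HD.
  destruct (sgn_cexp_bound (s k) (W k) (Hs k)). split; lra.
Qed.

Lemma Re_quad (P Q R0 : C) (r : R) :
  Re (P * RtoC r * RtoC r + Q * RtoC r + R0) = (Re P * r * r + Re Q * r + Re R0)%R.
Proof. destruct P, Q, R0. unfold Re, RtoC; simpl. ring. Qed.

Lemma gdecay_ext f g : (forall k, f k = g k) -> gdecay f -> gdecay g.
Proof. intros H [D HD]. exists D. intros k. rewrite <- H. apply HD. Qed.

Lemma zsum_ext f g : (forall k, f k = g k) -> zsum f = zsum g.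
Proof. intros H. f_equal. apply functional_extensionality. exact H. Qed.

Lemma cexp_2piZ (j : Z) : cexp (2 * RtoC PI * Ci * ZtoC j) = 1.
Proof.
  assert (H1 : sin (IZR j * PI) = 0%R) by (apply sin_eq_0_1; exists j; reflexivity).
  unfold cexp, ZtoC, Re, Im, RtoC; simpl.
  replace (((2 * PI - 0 * 0) * 0 - (2 * 0 + 0 * PI) * 1) * IZR j - ((2 * PI - 0 * 0) * 1 + (2 * 0 + 0 * PI) * 0) * 0)%R with 0%R by ring.
  replace (((2 * PI - 0 * 0) * 0 - (2 * 0 + 0 * PI) * 1) * 0 + ((2 * PI - 0 * 0) * 1 + (2 * 0 + 0 * PI) * 0) * IZR j)%R
    with (2 * (IZR j * PI))%R by ring.
  rewrite exp_0, cos_2a_sin, sin_2a, H1. apply Cpair_eq; ring.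
Qed.

Lemma cexp_pi : cexp (RtoC PI * Ci) = -1.
Proof.
  unfold cexp, Re, Im, RtoC; simpl.
  replace (PI * 0 - 0 * 1)%R with 0%R by ring. replace (PI * 1 + 0 * 0)%R with PI by ring.
  rewrite exp_0, cos_PI, sin_PI. apply Cpair_eq; ring.
Qed.

Lemma ZtoC_mult a b : ZtoC (a * b) = ZtoC a * ZtoC b.
Proof. unfold ZtoC. rewrite mult_IZR. unfold RtoC, Cmult; simpl. apply Cpair_eq; ring. Qed.

Lemma ZtoC_plus1 a : ZtoC (a + 1) = ZtoC a + 1.
Proof. unfold ZtoC. rewrite plus_IZR. unfold RtoC, Cplus; simpl. apply Cpair_eq; ring. Qed.

Lemma zsign_pm k : zsign k = 1 \/ zsign k = -1.
Proof. unfold zsign. destruct (Z.even k); auto. Qed.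

Lemma zsign_succ k : zsign (k + 1) = - zsign k.
Proof.
  unfold zsign. rewrite Z.even_add. simpl. destruct (Z.even k); simpl;
  unfold Copp, RtoC; simpl; apply Cpair_eq; ring.
Qed.

Lemma floorRe_succ e : floorRe (e + 1) = (floorRe e + 1)%Z.
Proof.
  unfold floorRe. symmetry. apply Int_part_spec.
  rewrite plus_IZR. destruct (base_Int_part (Re e)).
  replace (Re (e + 1)) with (Re e + 1)%R by (destruct e; reflexivity). lra.
Qed.

Lemma cexp_fact (s D X Y : C) : X = D + Y -> s * cexp X = cexp D * (s * cexp Y).
Proof. intros ->. rewrite cexp_add. ring. Qed.

Lemma cexp_factZ (s D X Y : C) (a b : Z) : X = D + 2 * RtoC PI * Ci * (ZtoC a * ZtoC b) + Y ->
  s * cexp X = cexp D * (s * cexp Y).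
Proof.
  intros ->. rewrite !cexp_add, <- ZtoC_mult, cexp_2piZ. ring.
Qed.

Definition thterm (u tau : C) (k : Z) : C :=
  zsign k * cexp (RtoC PI * Ci * (ZtoC k + /2) * (ZtoC k + /2) * tau
                  + 2 * RtoC PI * Ci * u * (ZtoC k + /2)).

Lemma theta1_eq u tau : theta1 u tau = - Ci * zsum (thterm u tau).
Proof. reflexivity. Qed.

Lemma thterm_decay u tau : (0 < Im tau)%R -> gdecay (thterm u tau).
Proof.
  intros Ht. unfold thterm.
  apply (term_decay zsign _ (Re (RtoC PI * Ci * tau))
           (Re (2 * /2 * RtoC PI * Ci * tau + 2 * RtoC PI * Ci * u))
           (Re (/2 * /2 * RtoC PI * Ci * tau + 2 * RtoC PI * Ci * u * /2))).
  - destruct tau as [t1 t2]. unfold Re, Im, RtoC in *; simpl in *.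
    pose proof PI_RGT_0. nra.
  - apply zsign_pm.
  - intros k. unfold ZtoC. rewrite <- Re_quad. f_equal. ring.
Qed.

Lemma theta1_plus1 u tau : (0 < Im tau)%R -> theta1 (u + 1) tau = - theta1 u tau.
Proof.
  intros Ht. rewrite !theta1_eq.
  rewrite (zsum_ext _ (fun k => (-1) * thterm u tau k)).
  - rewrite zsum_scal by (apply thterm_decay; auto). ring.
  - intros k. unfold thterm.
    rewrite <- cexp_pi. apply cexp_factZ with (a := k) (b := 1%Z).
    unfold ZtoC. simpl IZR. field.
Qed.

Lemma cexp_fact_neg (s D X Y : C) : X = D + Y -> s * cexp X = (- cexp D) * (- s * cexp Y).
Proof. intros H. rewrite (cexp_fact s D X Y H). ring. Qed.

Lemma theta1_plustau u tau : (0 < Im tau)%R ->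
  theta1 (u + tau) tau = (- cexp (- (RtoC PI * Ci * tau) - 2 * RtoC PI * Ci * u)) * theta1 u tau.
Proof.
  intros Ht. rewrite !theta1_eq.
  rewrite (zsum_ext _ (fun k => (- cexp (- (RtoC PI * Ci * tau) - 2 * RtoC PI * Ci * u)) * thterm u tau (k + 1)%Z)).
  - rewrite zsum_scal by (apply gdecay_shift, thterm_decay; auto).
    rewrite (zsum_shift (thterm u tau)) by (apply thterm_decay; auto). ring.
  - intros k. unfold thterm. rewrite zsign_succ, ZtoC_plus1.
    apply cexp_fact_neg. field.
Qed.

Definition chterm (n l : Z) (n' e' u v tau : C) (m : Z) : C :=
    zsign (m * l)%Z
    * cexp (2 * RtoC PI * Ci * v * (e' + ZtoC m * ZtoC l))
    * cexp (2 * RtoC PI * Ci * u * (n' + ZtoC m * ZtoC n))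
    * cexp (2 * RtoC PI * Ci * tau *
        (n' * e' + e' * e' / 2
         + ZtoC m * ZtoC m / 2 * (2 * ZtoC n * ZtoC l + ZtoC l * ZtoC l)
         + ZtoC m * (ZtoC n * e' + n' * ZtoC l + ZtoC l * e'))).

Lemma chiT_eq n l n' e' u v tau : chiT n l n' e' u v tau =
  Ci * zsign (floorRe e') * theta1 u tau / (eta tau * eta tau * eta tau) * zsum (chterm n l n' e' u v tau).
Proof. reflexivity. Qed.

Lemma chterm_comb n l n' e' u v tau m : chterm n l n' e' u v tau m =
  zsign (m * l)%Z * cexp (2 * RtoC PI * Ci * v * (e' + ZtoC m * ZtoC l)
    + 2 * RtoC PI * Ci * u * (n' + ZtoC m * ZtoC n)
    + 2 * RtoC PI * Ci * tau *
        (n' * e' + e' * e' / 2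
         + ZtoC m * ZtoC m / 2 * (2 * ZtoC n * ZtoC l + ZtoC l * ZtoC l)
         + ZtoC m * (ZtoC n * e' + n' * ZtoC l + ZtoC l * e'))).
Proof. unfold chterm. rewrite !cexp_add. ring. Qed.

Lemma Kpos (n l : Z) : (0 < l)%Z -> (l | n)%Z -> (0 < n * l + l * l)%Z ->
  (0 < 2 * IZR n * IZR l + IZR l * IZR l)%R.
Proof.
  intros hl [k ->] hp.
  assert (Hll : (0 < l * l)%Z) by nia.
  assert (Hk : (0 <= k)%Z).
  { destruct (Z_lt_le_dec k 0) as [Hlt|]; [|lia]. exfalso.
    assert (((k + 1) * (l * l) <= 0)%Z) by (apply Z.mul_nonpos_nonneg; lia). nia. }
  assert (H : (0 < 2 * (k * l) * l + l * l)%Z) by nia.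
  apply IZR_lt in H. rewrite plus_IZR, !mult_IZR in H. rewrite mult_IZR. simpl in H. lra.
Qed.

Lemma chterm_decay n l n' e' u v tau : (0 < l)%Z -> (l | n)%Z -> (0 < n * l + l * l)%Z ->
  (0 < Im tau)%R -> gdecay (chterm n l n' e' u v tau).
Proof.
  intros hl hd hp Ht.
  apply gdecay_ext with (fun m => zsign (m * l)%Z * cexp (2 * RtoC PI * Ci * v * (e' + ZtoC m * ZtoC l)
    + 2 * RtoC PI * Ci * u * (n' + ZtoC m * ZtoC n)
    + 2 * RtoC PI * Ci * tau *
        (n' * e' + e' * e' / 2
         + ZtoC m * ZtoC m / 2 * (2 * ZtoC n * ZtoC l + ZtoC l * ZtoC l)
         + ZtoC m * (ZtoC n * e' + n' * ZtoC l + ZtoC l * e')))).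
  { intros; symmetry; apply chterm_comb. }
  apply (term_decay (fun m => zsign (m * l)%Z) _
           (Re (RtoC PI * Ci * tau * (2 * ZtoC n * ZtoC l + ZtoC l * ZtoC l)))
           (Re (2 * RtoC PI * Ci * (v * ZtoC l + u * ZtoC n + tau * (ZtoC n * e' + n' * ZtoC l + ZtoC l * e'))))
           (Re (2 * RtoC PI * Ci * (v * e' + u * n' + tau * (n' * e' + e' * e' / 2))))).
  - pose proof (Kpos n l hl hd hp). pose proof PI_RGT_0.
    destruct tau as [t1 t2]. unfold ZtoC, Re, Im, RtoC in *; simpl in *.
    match goal with |- (?e < 0)%R => replace e with (- (PI * t2 * (2 * IZR n * IZR l + IZR l * IZR l)))%R by ring end.
    assert (0 < PI * t2 * (2 * IZR n * IZR l + IZR l * IZR l))%R by (apply Rmult_lt_0_compat; [apply Rmult_lt_0_compat|]; lra).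
    lra.
  - intros; apply zsign_pm.
  - intros k. rewrite <- Re_quad. f_equal. cbv beta. unfold Cdiv, ZtoC. field.
Qed.

Lemma cexp_negint j : cexp (- (2 * RtoC PI * Ci * ZtoC j)) = 1.
Proof.
  replace (- (2 * RtoC PI * Ci * ZtoC j)) with (2 * RtoC PI * Ci * ZtoC (- j)).
  - apply cexp_2piZ.
  - unfold ZtoC. rewrite opp_IZR. unfold RtoC, Copp, Cmult; simpl. apply Cpair_eq; ring.
Qed.

Section S.
Variables (n l : Z) (hl : (0 < l)%Z) (hdiv : (l | n)%Z)
  (hpos : (0 < n * l + l * l)%Z) (tau : C) (htau : (0 < Im tau)%R).

Lemma claim1 n' e' u v : chiT n l n' e' (u + 1) v tau
    = cexp (2 * RtoC PI * Ci * (n' - / 2)) * chiT n l n' e' u v tau.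
Proof.
  rewrite !chiT_eq, theta1_plus1 by auto.
  rewrite (zsum_ext _ (fun m => cexp (2 * RtoC PI * Ci * n') * chterm n l n' e' u v tau m)).
  2:{ intros m. rewrite !chterm_comb. apply cexp_factZ with (a := m) (b := n). unfold Cdiv; field. }
  rewrite zsum_scal by (apply chterm_decay; auto).
  assert (E : cexp (2 * RtoC PI * Ci * (n' - / 2)) = - cexp (2 * RtoC PI * Ci * n')).
  { transitivity (cexp (- (2 * RtoC PI * Ci * ZtoC 1)) * (cexp (2 * RtoC PI * Ci * n') * cexp (RtoC PI * Ci))).
    { rewrite <- !cexp_add. f_equal. unfold ZtoC; simpl IZR. field. }
    rewrite cexp_negint, cexp_pi. ring. }
  rewrite E. unfold Cdiv. ring.
Qed.

Lemma claim2 n' e' u v : chiT n l n' e' (u + tau) v tau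
    = cexp (- (2 * RtoC PI * Ci * v)) * chiT n l (n' - 1) (e' + 1) u v tau.
Proof.
  rewrite !chiT_eq, theta1_plustau, floorRe_succ, zsign_succ by auto.
  rewrite (zsum_ext _ (fun m => cexp (- (2 * RtoC PI * Ci * v) + 2 * RtoC PI * Ci * u + RtoC PI * Ci * tau)
                                * chterm n l (n' - 1) (e' + 1) u v tau m)).
  2:{ intros m. rewrite !chterm_comb. apply cexp_fact. unfold Cdiv; field. }
  rewrite zsum_scal by (apply chterm_decay; auto).
  assert (E : cexp (- (RtoC PI * Ci * tau) - 2 * RtoC PI * Ci * u)
              * cexp (- (2 * RtoC PI * Ci * v) + 2 * RtoC PI * Ci * u + RtoC PI * Ci * tau)
              = cexp (- (2 * RtoC PI * Ci * v))).
  { rewrite <- cexp_add. f_equal. ring. }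
  rewrite <- E. unfold Cdiv. ring.
Qed.

Lemma claim3 n' e' u v : chiT n l n' e' u (v + 1) tau
    = cexp (2 * RtoC PI * Ci * e') * chiT n l n' e' u v tau.
Proof.
  rewrite !chiT_eq.
  rewrite (zsum_ext _ (fun m => cexp (2 * RtoC PI * Ci * e') * chterm n l n' e' u v tau m)).
  2:{ intros m. rewrite !chterm_comb. apply cexp_factZ with (a := m) (b := l). unfold Cdiv; field. }
  rewrite zsum_scal by (apply chterm_decay; auto).
  unfold Cdiv. ring.
Qed.

Lemma claim4 n' e' u v : chiT n l n' e' u (v + tau) tau
    = cexp (- (2 * RtoC PI * Ci * u)) * chiT n l (n' + 1) e' u v tau.
Proof.
  rewrite !chiT_eq.
  rewrite (zsum_ext _ (fun m => cexp (- (2 * RtoC PI * Ci * u)) * chterm n l (n' + 1) e' u v tau m)).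
  2:{ intros m. rewrite !chterm_comb. apply cexp_fact. unfold Cdiv; field. }
  rewrite zsum_scal by (apply chterm_decay; auto).
  unfold Cdiv. ring.
Qed.

Lemma claim5 n' e' u v (alpha : R) : chiT n l n' e' u (v + RtoC alpha * tau) tau
    = cexp (- (2 * RtoC PI * Ci * RtoC alpha * u)) * chiT n l (n' + RtoC alpha) e' u v tau.
Proof.
  rewrite !chiT_eq.
  rewrite (zsum_ext _ (fun m => cexp (- (2 * RtoC PI * Ci * RtoC alpha * u)) * chterm n l (n' + RtoC alpha) e' u v tau m)).
  2:{ intros m. rewrite !chterm_comb. apply cexp_fact. unfold Cdiv; field. }
  rewrite zsum_scal by (apply chterm_decay; auto).
  unfold Cdiv. ring.
Qed.
End S.

Theorem mainTheorem4 (n l : Z) (hl : (0 < l)%Z) (hdiv : (l | n)%Z)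
  (hpos : (0 < n * l + l * l)%Z) (n' e' u v tau : C) (htau : (0 < Im tau)%R) :
  chiT n l n' e' (u + 1) v tau
    = cexp (2 * RtoC PI * Ci * (n' - / 2)) * chiT n l n' e' u v tau
  /\ chiT n l n' e' (u + tau) v tau
    = cexp (- (2 * RtoC PI * Ci * v)) * chiT n l (n' - 1) (e' + 1) u v tau
  /\ chiT n l n' e' u (v + 1) tau
    = cexp (2 * RtoC PI * Ci * e') * chiT n l n' e' u v tau
  /\ chiT n l n' e' u (v + tau) tau
    = cexp (- (2 * RtoC PI * Ci * u)) * chiT n l (n' + 1) e' u v tau
  /\ (forall alpha : R,
      chiT n l n' e' u (v + RtoC alpha * tau) tau
        = cexp (- (2 * RtoC PI * Ci * RtoC alpha * u))
          * chiT n l (n' + RtoC alpha) e' u v tau).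
Proof.
  split; [|split; [|split; [|split]]].
  - apply claim1; auto.
  - apply claim2; auto.
  - apply claim3; auto.
  - apply claim4; auto.
  - intros alpha. apply claim5; auto.
Qed.
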